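(* Let $\mu\in(0,1)$ and $\beta(a)=\frac{\mu}{1+a}$. Let $W(\tau,b)=C(\tau)(1-b)^{\mu-1}(1+e^{\tau}b)^{-\mu}$ for $\tau\ge0$, $b\in[0,1)$, with $C(\tau)>0$ such that $\int_0^1W(\tau,b)db=1$, let $\delta(\tau)=\frac{C'(\tau)}{C(\tau)^2}-\frac{\mu}{C(\tau)}$, $c(\tau)=e^{-\mu\tau}C(\tau)$, and $c_\infty=\lim_{\tau\to\infty}c(\tau)$ (which exists since $c$ is decreasing). Then for all $\tau\ge0$, $$-4e^{-(1-\mu)\tau}\le C(\tau)\delta(\tau)\le-\frac{c_\infty}{1+e^{-\tau}}e^{-(1-\mu)\tau}\le0.$$ *)

(* Defs.v *)
From HB Require Import structures.
From mathcomp Require Import all_boot all_order all_algebra.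
From mathcomp Require Import all_classical all_reals all_analysis.
Set Implicit Arguments. Unset Strict Implicit. Unset Printing Implicit Defensive.
Import Order.TTheory GRing.Theory Num.Theory.
Import numFieldNormedType.Exports.
Local Open Scope classical_set_scope.
Local Open Scope ring_scope.

Definition Wraw {R : realType} (mu tau b : R) : R :=
  (1 - b) `^ (mu - 1) * (1 + expR tau * b) `^ (- mu).

Definition Wmass {R : realType} (mu tau : R) : R :=
  fine (\int[@lebesgue_measure R]_(b in `[0%R, 1%R[) (Wraw mu tau b)%:E)%E.

Definition Cnorm {R : realType} (mu tau : R) : R := (Wmass mu tau)^-1.

Definition delta {R : realType} (mu tau : R) : R :=
  derive1 (Cnorm mu) tau / (Cnorm mu tau) ^+ 2 - mu / Cnorm mu tau.

Definition csmall {R : realType} (mu tau : R) : R := expR (- (mu * tau)) * Cnorm mu tau.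

(* Main.v *)
Require Import Defs.
From HB Require Import structures.
From mathcomp Require Import all_boot all_order all_algebra.
From mathcomp Require Import all_classical all_reals all_analysis.
From mathcomp Require Import measurable_realfun.
Set Implicit Arguments. Unset Strict Implicit. Unset Printing Implicit Defensive.
Import Order.TTheory GRing.Theory Num.Theory.
Import numFieldNormedType.Exports.
Local Open Scope classical_set_scope.
Local Open Scope ring_scope.
From mathcomp Require Import ring lra.
Section P4.
Context {R : realType}.
Notation mu := (@lebesgue_measure R).

Lemma FTC2_co (f G : R -> R) (a b l : R) : a < b ->
  (forall x, a <= x < b -> 0 <= f x) ->
  (forall x, a <= x < b -> {for x, continuous f}) ->
  (forall x, a <= x < b -> derivable G x 1 /\ derive1 G x = f x) ->
  G x @[x --> b^'-] --> l ->
  (\int[mu]_(x in `[a, b[) (f x)%:E = (l - G a)%:E)%E.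
Proof.
move=> ab f0 cf dG Gl.
pose F n : set R := `[a, b - n.+1%:R^-1]%classic.
have nndF : nondecreasing_seq F.
  apply/nondecreasing_seqP => n; rewrite /F; apply/subsetPset.
  apply: subset_itvl; rewrite bnd_simp lerB// lef_pV2 ?posrE// ler_nat.
  exact: leqnSn.
have mF i : measurable (F i) by exact: measurable_itv.
have cfF i : {within F i, continuous f}.
  apply: continuous_in_subspaceT => x; rewrite inE /F/= in_itv/= => /andP[ax xb].
  apply: cf; rewrite ax/= (le_lt_trans xb)// ltrBlDr ltrDl invr_gt0 ltr0n//.
have f0' i x : F i x -> (0 <= (EFin \o f) x)%E.
  rewrite /F/= in_itv/= => /andP[ax xb]; rewrite lee_fin f0// ax/=.
  by rewrite (le_lt_trans xb)// ltrBlDr ltrDl invr_gt0 ltr0n.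
have := @ge0_nondecreasing_set_cvg_integral _ (measurableTypeR R) R F (EFin \o f) mu nndF mF _ f0'.
have mf i : measurable_fun (F i) f by exact: subspace_continuous_measurable_fun.
move=> /(_ (fun i => proj2 (measurable_EFinP _ _) (mf i))).
rewrite -(itv_bnd_open_bigcup true a b) => H1.
apply: (cvg_unique _ H1); first exact: ereal_hausdorff.
have ub : (fun n => b - n.+1%:R^-1) @ \oo --> b.
  rewrite -[X in _ --> X]subr0; apply: cvgB; first exact: cvg_cst.
  exact: cvg_harmonic.
have Gu : (fun n => G (b - n.+1%:R^-1)) @ \oo --> l.
  move/cvg_at_leftP : Gl; apply; split => // n.
  by rewrite ltrBlDr ltrDl invr_gt0 ltr0n.
have [N aN] : exists N, a < b - N.+1%:R^-1.
  have /cvgrPdist_lt /(_ (b - a)) := ub.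
  rewrite subr_gt0 => /(_ ab) [N _ HN].
  exists N; have := HN N (leqnn N); rewrite /= ger0_norm; last first.
    by rewrite subr_ge0 gerBl invr_ge0.
  by rewrite opprB addrCA subrr addr0 ltrBrDl addrC -ltrBrDl.
have H2 : ((G (b - n.+1%:R^-1) - G a)%:E) @[n --> \oo] --> (l - G a)%:E.
  apply: cvg_EFin; first exact: nearW.
  by apply: cvgB => //; exact: cvg_cst.

apply: (cvg_trans _ H2).
  apply: near_eq_cvg; near=> n.
  have aNn : a < b - n.+1%:R^-1.
    apply: (lt_le_trans aN); rewrite lerB// lef_pV2 ?posrE// ler_nat ltnS.
    by near: n; exact: nbhs_infty_ge.
  rewrite /= (@continuous_FTC2 _ f G) // ?EFinB.
  - exact: cfF.
  - split.
    + move=> x; rewrite in_itv/= => /andP[ax xb]; apply: (proj1 (dG x _)).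
      by rewrite ltW//= (lt_trans xb)// ltrBlDr ltrDl invr_gt0 ltr0n.
    + apply: cvg_at_right_filter; apply: differentiable_continuous.
      by apply/derivable1_diffP; apply: (proj1 (dG a _)); rewrite lexx ab.
    + apply: cvg_at_left_filter; apply: differentiable_continuous.
      apply/derivable1_diffP; apply: (proj1 (dG _ _)).
      by rewrite ltW//= ltrBlDr ltrDl invr_gt0 ltr0n.
  - move=> x; rewrite in_itv/= => /andP[ax xb]; apply: (proj2 (dG x _)).
    by rewrite ltW//= (lt_trans xb)// ltrBlDr ltrDl invr_gt0 ltr0n.
Unshelve. all: by end_near. Qed.
End P4.
Section P2.
Context {R : realType}.
Notation mu := (@lebesgue_measure R).

Definition qf (m v : R) : R := (1 + v `^ m^-1)^-1.
Definition Qf (m z : R) : R := parameterized_integral mu 0 z (qf m).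

Lemma qf_gt0 m v : 0 < qf m v.
Proof. by rewrite /qf invr_gt0 ltr_wpDr// powR_ge0. Qed.

Lemma qf_le1 m v : qf m v <= 1.
Proof. by rewrite /qf invf_le1// ?ler_wpDr ?powR_ge0// ltr_wpDr// powR_ge0. Qed.

Lemma powR_cont (p v : R) : 0 < v -> {for v, continuous (fun x : R => x `^ p)}.
Proof.
move=> v0; apply: differentiable_continuous; apply/derivable1_diffP.
by have [] := is_derive1_powR p v0.
Qed.

Lemma qf_cont m v : 0 < v -> {for v, continuous (qf m)}.
Proof.
move=> v0; rewrite /qf.
apply: continuousV; first by rewrite gt_eqF// ltr_wpDr// powR_ge0.
apply: continuousD; first exact: cvg_cst.
exact: powR_cont.
Qed.

Lemma qf_within m u : 0 < m -> 0 < u -> {within `[0, u], continuous (qf m)}.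
Proof.
move=> m0 u0; apply/continuous_within_itvP => //; split.
- by move=> x; rewrite in_itv/= => /andP[x0 _]; exact: qf_cont.
- rewrite /qf powR0 ?invr_eq0 ?gt_eqF//.
  apply: cvgV; first by rewrite addr0 oner_neq0.
  apply: cvgD; first exact: cvg_cst.
  by apply: powR_cvg0; rewrite invr_gt0.
- by apply: cvg_at_left_filter; exact: qf_cont.
Qed.

Lemma qf_int m u : 0 < m -> 0 < u -> mu.-integrable `[0, u] (EFin \o qf m).
Proof.
move=> m0 u0; apply: continuous_compact_integrable; first exact: segment_compact.
exact: qf_within.
Qed.

Lemma Qf_derive m z : 0 < m -> 0 < z -> derivable (Qf m) z 1 /\ derive1 (Qf m) z = qf m z.
Proof.
move=> m0 z0.
have := @continuous_FTC1_closed R (qf m) 0 z (z + 1) _ (@qf_int m _ m0 _) z0 (@qf_cont m z z0).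
by apply; rewrite ?ltrDl// addr_gt0.
Qed.

Lemma Qf0 m : Qf m 0 = 0.
Proof. by rewrite /Qf /parameterized_integral set_itv1 Rintegral_set1. Qed.

Lemma Qf_within m z : 0 < m -> 0 <= z -> {within `[0, z], continuous (Qf m)}.
Proof.
move=> m0; rewrite le_eqVlt => /predU1P[<-|z0].
  by rewrite set_itv1; exact: continuous_subspace1.
exact: (parameterized_integral_continuous (ltW z0) (qf_int m0 z0)).
Qed.

Lemma Qf_cvg0 m : 0 < m -> Qf m z @[z --> 0^'+] --> 0.
Proof.
move=> m0; have /(continuous_within_itvP _ ltr01) [_ + _] := Qf_within m0 ler01.
by rewrite Qf0.
Qed.

End P2.
Section P3.
Context {R : realType}.

Definition Kf (m s : R) : R := m^-1 * Qf m (expR (m * s)).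

Lemma powR_expR (a p : R) : expR a `^ p = expR (p * a).
Proof. by rewrite /powR gt_eqF ?expR_gt0// expRK. Qed.

Lemma Kf_derive (m s : R) : 0 < m -> is_derive s 1 (Kf m) (expR (m * s) / (1 + expR s)).
Proof.
move=> m0.
have [d1 e1] := Qf_derive m0 (expR_gt0 (m * s)).
have h1 : is_derive (expR (m * s)) 1 (Qf m) (qf m (expR (m * s))).
  by rewrite -e1 derive1E; apply: derivableP.
have h3 : is_derive s 1 (fun t : R => m * t) m.
  have := @is_deriveZ R R R id m s 1 1 (is_derive_id _ _).
  by rewrite scaler1.
have h2 : is_derive s 1 (fun t => expR (m * t)) (expR (m * s) * m).
  exact: (@is_derive1_comp _ expR (fun t : R => m * t)).
have h4 := @is_derive1_comp R (Qf m) (fun t => expR (m * t)) s _ _ h1 h2.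
have := @is_deriveZ R R R _ m^-1 s 1 _ h4.
case=> d5 e5; split; first exact: d5.
rewrite (_ : 'D_1 (Kf m) s = m^-1 *: (qf m (expR (m * s)) * (expR (m * s) * m))); last exact: e5.

change (m^-1 * (qf m (expR (m * s)) * (expR (m * s) * m)) = expR (m * s) / (1 + expR s)).
rewrite /qf powR_expR mulKf ?gt_eqF// mulrCA [expR _ * m]mulrC mulKf ?gt_eqF// mulrC.
by [].


Qed.

End P3.
Section P5.
Context {R : realType}.

Lemma isd (f g : R -> R) (x a b : R) : is_derive x 1 f a -> f =1 g -> a = b -> is_derive x 1 g b.
Proof. by move=> h /funext <- <-. Qed.

Definition sig (t b : R) : R := t + ln (1 - b) - ln (1 + expR t * b).
Definition Gf (m t b : R) : R := - expR (- (m * t)) * Kf m (sig t b).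

Lemma sig_derive (t b : R) : 0 < 1 - b -> 0 < 1 + expR t * b ->
  is_derive b 1 (sig t) (- (1 - b)^-1 - expR t / (1 + expR t * b)).
Proof.
move=> a0 c0.
have h1 : is_derive b 1 (fun b : R => 1 - b) (-1).
  apply: (isd (@is_deriveB R R R (cst 1) id b 1 0 1 (is_derive_cst _ _ _) (is_derive_id _ _))).
    by [].
  by rewrite sub0r.
have h2 : is_derive b 1 (fun b : R => 1 + expR t * b) (expR t).
  apply: (isd (@is_deriveD R R R (cst 1) (expR t *: id) b 1 0 (expR t *: 1) (is_derive_cst _ _ _)
    (@is_deriveZ R R R id (expR t) b 1 1 (is_derive_id _ _)))).
    by [].
  by rewrite add0r /GRing.scale/= mulr1.
have h3 := @is_derive1_comp R (@ln R) (fun b : R => 1 - b) b _ _ (is_derive1_ln a0) h1.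
have h4 := @is_derive1_comp R (@ln R) (fun b : R => 1 + expR t * b) b _ _ (is_derive1_ln c0) h2.
have h5 := @is_deriveD R R R (cst t) _ b 1 0 _ (is_derive_cst _ _ _) h3.
have h6 := @is_deriveB R R R _ _ b 1 _ _ h5 h4.
apply: (isd h6); first by [].
by rewrite add0r mulrN1 mulrC.
Qed.

Lemma alg_id (m t b : R) : 0 < 1 - b -> 0 < 1 + expR t * b ->
  - expR (- (m * t)) * (expR (m * sig t b) / (1 + expR (sig t b)) *
     (- (1 - b)^-1 - expR t / (1 + expR t * b))) = Wraw m t b.
Proof.
move=> a0 c0; rewrite /Wraw /sig /powR !gt_eqF//.
set a := 1 - b in a0 *; set c := 1 + expR t * b in c0 *.
have ea : expR (ln a) = a by rewrite lnK.
have ec : expR (ln c) = c by rewrite lnK.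
rewrite !mulrDr !mulrN !expRD !expRN mulrBl mul1r [- m * _]mulNr expRD !expRN ea ec.
field.
have ca : 0 < c + expR t * a by rewrite addr_gt0// mulr_gt0// expR_gt0.
by rewrite !gt_eqF ?expR_gt0.
Qed.

End P5.
Section P5b.
Context {R : realType}.

Lemma Gf_derive (m t b : R) : 0 < m -> 0 < 1 - b -> 0 < 1 + expR t * b ->
  derivable (Gf m t) b 1 /\ derive1 (Gf m t) b = Wraw m t b.
Proof.
move=> m0 a0 c0.
have h1 := @is_derive1_comp R (Kf m) (sig t) b _ _ (Kf_derive (sig t b) m0) (sig_derive a0 c0).
have h2 := @is_deriveZ R R R _ (- expR (- (m * t))) b 1 _ h1.
have h3 : is_derive b 1 (Gf m t) (Wraw m t b).
  apply: (isd h2) => //; rewrite -(alg_id m a0 c0); by [].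
split; first by case: h3.
by rewrite derive1E; apply: derive_val.
Qed.

Lemma expR_sig (m t y : R) : 0 < 1 - y -> 0 < 1 + expR t * y ->
  expR (m * sig t y) = expR (m * t) * (1 - y) `^ m * (1 + expR t * y) `^ (- m).
Proof.
move=> a0 c0; rewrite /sig /powR !gt_eqF// !mulrDr !mulrN !expRD !expRN.
by rewrite mulNr expRN.
Qed.

Lemma Gf_cvg (m t : R) : 0 < m -> Gf m t x @[x --> 1^'-] --> 0.
Proof.
move=> m0; apply/cvg_at_leftP => u [u1 ucvg].
set x := expR t.
have hc : (fun n => 1 + x * u n) @ \oo --> 1 + x.
  by apply: cvgD; [exact: cvg_cst | rewrite -[X in _ --> X]mulr1; apply: cvgMl_tmp].
have cpos := cvgr_gt _ hc _ (addr_gt0 ltr01 (expR_gt0 t)).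
have h1 : (fun n => (1 - u n) `^ m) @ \oo --> 0.
  have := powR_cvg0 m0; move/cvg_at_rightP; apply; split.
    by move=> n; rewrite subr_gt0.
  rewrite -(subrr 1); apply: cvgB; [exact: cvg_cst | exact: ucvg].
have h2 : (fun n => (1 + x * u n) `^ (- m)) @ \oo --> (1 + x) `^ (- m).
  apply: (@continuous_cvg _ _ _ _ _ (fun n => 1 + x * u n) (fun y => y `^ (- m))) => //.
  by apply: powR_cont; rewrite addr_gt0// expR_gt0.
have h3 : (fun n => expR (m * t) * (1 - u n) `^ m * (1 + x * u n) `^ (- m)) @ \oo --> 0.
  rewrite -(mul0r ((1 + x) `^ (- m))) -(mulr0 (expR (m * t))).
  apply: cvgM => //; apply: cvgMl_tmp => //.
have h4 : (fun n => expR (m * sig t (u n))) @ \oo --> 0.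
  apply: cvg_trans h3; apply: near_eq_cvg; near=> n.
  rewrite expR_sig// ?subr_gt0//.
  by near: n; exact: cpos.
have h5 : (fun n => Qf m (expR (m * sig t (u n)))) @ \oo --> 0.
  have := Qf_cvg0 m0; move/cvg_at_rightP; apply; split => //.
  by move=> n; exact: expR_gt0.
rewrite /Gf /Kf -(mulr0 (- expR (- (m * t)))) -(mulr0 m^-1).
apply: cvgMl_tmp; apply: cvgMl_tmp; exact: h5.
Unshelve. all: by end_near. Qed.

End P5b.
Section P6.
Context {R : realType}.

Lemma powR_comp_cont (g : R -> R) (p x : R) : {for x, continuous g} -> 0 < g x ->
  {for x, continuous (fun y => g y `^ p)}.
Proof.
move=> gc gx.
exact: (@continuous_comp _ _ _ g (fun y => y `^ p) x gc (@powR_cont _ p _ gx)).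
Qed.

Lemma Wraw_cont (m t x : R) : 0 < 1 - x -> 0 < 1 + expR t * x -> {for x, continuous (Wraw m t)}.
Proof.
move=> a0 c0; rewrite /Wraw.
apply: continuousM.
- apply: (@powR_comp_cont (fun y => 1 - y)) => //.
  by apply: continuousB; [exact: cvg_cst | exact: cvg_id].
- apply: (@powR_comp_cont (fun y => 1 + expR t * y)) => //.
  apply: continuousD; first exact: cvg_cst.
  by apply: continuousM; [exact: cvg_cst | exact: cvg_id].
Qed.

Lemma Wmass_eq (m t : R) : 0 < m -> Wmass m t = expR (- (m * t)) * Kf m t.
Proof.
move=> m0.
have hx x : 0 <= x < 1 -> 0 < 1 - x /\ 0 < 1 + expR t * x.
  move=> /andP[x0 x1]; split; first by rewrite subr_gt0.
  by rewrite ltr_pwDl// mulr_ge0// ltW// expR_gt0.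
have := @FTC2_co R (Wraw m t) (Gf m t) 0 1 0 ltr01 _ _ _ (Gf_cvg t m0).
rewrite /Wmass => ->.
- rewrite /= /Gf /sig subr0 mulr0 addr0 ln1 subr0 addr0.
  by rewrite sub0r mulNr opprK.
- by move=> x _; rewrite /Wraw mulr_ge0// powR_ge0.
- by move=> x /hx[a0 c0]; exact: Wraw_cont.
- by move=> x /hx[a0 c0]; exact: Gf_derive.
Qed.

End P6.
Section P7.
Context {R : realType}.

Lemma Qf_is_derive (m z : R) : 0 < m -> 0 < z -> is_derive z 1 (Qf m) (qf m z).
Proof.
move=> m0 z0; have [d1 e1] := Qf_derive m0 z0.
by rewrite -e1 derive1E; apply: derivableP.
Qed.

Lemma Qf_MVT (m z : R) : 0 < m -> 0 < z -> exists2 c, 0 < c < z & Qf m z = qf m c * z.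
Proof.
move=> m0 z0.
have [c cz E] := @MVT R (Qf m) (qf m) 0 z z0
  (fun x hx => Qf_is_derive m0 (ltac:(by rewrite (itvP hx)) : 0 < x)) (Qf_within m0 (ltW z0)).
exists c; first by move: cz; rewrite in_itv.
by move: E; rewrite Qf0 !subr0.
Qed.

Lemma Qf_gt0 (m z : R) : 0 < m -> 0 < z -> 0 < Qf m z.
Proof.
move=> m0 z0; have [c _ ->] := Qf_MVT m0 z0.
by rewrite mulr_gt0// qf_gt0.
Qed.

Lemma Qf1 (m : R) : 0 < m -> 2^-1 <= Qf m 1.
Proof.
move=> m0; have [c /andP[c0 c1] ->] := Qf_MVT m0 ltr01.
rewrite mulr1 /qf lef_pV2 ?posrE ?ltr0n ?ltr_wpDr ?powR_ge0//.
rewrite [2]/(1 + 1) lerD2l.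
have := @ger_powR R c _ 0 m^-1; rewrite powRr0; apply.
  by rewrite c0 ltW.
by rewrite invr_ge0 ltW.
Qed.

Lemma Kf_gt0 (m s : R) : 0 < m -> 0 < Kf m s.
Proof. by move=> m0; rewrite /Kf mulr_gt0 ?invr_gt0// Qf_gt0// expR_gt0. Qed.

Lemma Kf_mono (m s1 s2 : R) : 0 < m -> s1 <= s2 -> Kf m s1 <= Kf m s2.
Proof.
move=> m0 s12.
have dK x : derivable (Kf m) x 1 by case: (Kf_derive x m0).
have [c _ E] := @MVT_segment R (Kf m) (fun s => expR (m * s) / (1 + expR s)) s1 s2 s12
  (fun x _ => Kf_derive x m0)
  (@derivable_within_continuous R R (Kf m) `[s1, s2] (fun x _ => dK x)).
rewrite -subr_ge0 E mulr_ge0 ?subr_ge0 //.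
all: try by rewrite divr_ge0// ?ltW ?expR_gt0// addr_gt0// expR_gt0.
Qed.

Lemma Kf_ge (m t : R) : 0 < m -> m < 1 -> 0 <= t -> 2^-1 <= Kf m t.
Proof.
move=> m0 m1 t0; apply: (le_trans _ (Kf_mono m0 t0)).
rewrite /Kf mulr0 expR0.
apply: (le_trans (Qf1 m0)); rewrite ler_peMl// ?(le_trans _ (Qf1 m0))// ?invr_ge0//.
by rewrite invf_ge1// ltW.
Qed.

End P7.
Section P8.
Context {R : realType}.

Lemma expRm_derive (m s : R) : is_derive s 1 (fun t => expR (m * t)) (expR (m * s) * m).
Proof.
have h3 : is_derive s 1 (fun t : R => m * t) m.
  have := @is_deriveZ R R R id m s 1 1 (is_derive_id _ _).
  by rewrite scaler1.
exact: (@is_derive1_comp _ expR (fun t : R => m * t)).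
Qed.

Lemma Cnorm_eq (m : R) : 0 < m -> Cnorm m = fun t => expR (m * t) * (Kf m t)^-1.
Proof.
move=> m0; apply/funext => t.
by rewrite /Cnorm Wmass_eq// invfM expRN invrK.
Qed.

Lemma Cdelta (m t : R) : 0 < m ->
  Cnorm m t * delta m t = - expR (m * t) / ((1 + expR t) * Kf m t).
Proof.
move=> m0.
have K0 : Kf m t != 0 by rewrite gt_eqF// Kf_gt0.
have hV := is_deriveV K0 (Kf_derive t m0).
have hM := @is_deriveM R R _ _ t 1 _ _ (expRm_derive m t) hV.
have hC : is_derive t 1 (Cnorm m) (expR (m * t) *: (- (Kf m t) ^- 2 *: (expR (m * t) / (1 + expR t)))
   + (Kf m t)^-1 *: (expR (m * t) * m)).
  by apply: (isd hM) => // s; rewrite (Cnorm_eq m0).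
rewrite /delta derive1E; case: hC => _ ->; rewrite (Cnorm_eq m0).
rewrite /GRing.scale /=.
have X0 : 1 + expR t != 0 by rewrite gt_eqF// addr_gt0// expR_gt0.
have E0 : expR (m * t) != 0 by rewrite gt_eqF// expR_gt0.
field.
by rewrite K0 X0 E0.
Qed.

End P8.
Lemma final_ineq {R : realType} (E X K c CD e1 e2 : R) : 0 < E -> 1 <= X -> 2^-1 <= K -> 0 <= c -> c <= K^-1 ->
  CD = - E / ((1 + X) * K) -> e1 = E * X^-1 -> e2 = X^-1 ->
  - 4 * e1 <= CD /\ CD <= - (c / (1 + e2)) * e1 /\ - (c / (1 + e2)) * e1 <= 0.
Proof.
move=> E0 X1 K2 c0 cK -> -> ->.
have X0 : 0 < X by apply: lt_le_trans X1.
have K0 : 0 < K by apply: lt_le_trans K2; rewrite invr_gt0.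
have X10 : 0 < 1 + X by rewrite addr_gt0.
have kle : K^-1 <= 2 by rewrite -[2]invrK lef_pV2 ?posrE ?invr_gt0.
have ab : (1 + X)^-1 <= X^-1 by rewrite lef_pV2 ?posrE// lerDr.
have a0 : 0 <= (1 + X)^-1 by rewrite invr_ge0 ltW.
have k0 : 0 <= K^-1 by rewrite invr_ge0 ltW.
have eqR : - E / ((1 + X) * K) = - (E * ((1 + X)^-1 * K^-1)) by rewrite invfM mulNr.
have eq2 : c / (1 + X^-1) * (E * X^-1) = c * (E * (1 + X)^-1).
  field; rewrite !gt_eqF// ?addr_gt0// invr_gt0//.
split; last split.
- rewrite eqR mulNr lerN2.
  have h : (1 + X)^-1 * K^-1 <= 2 * X^-1 by nra.
  apply: (le_trans (ler_wpM2l (ltW E0) h)).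
  have -> : E * (2 / X) = 2 * (E / X) by rewrite mulrCA.
  by rewrite ler_pM2r ?ler_nat// divr_gt0.
- rewrite eqR mulNr eq2 lerN2 mulrA [c * E]mulrC -mulrA ler_pM2l//.
  by rewrite mulrC; apply: ler_wpM2l.
- apply: mulr_le0_ge0; last by rewrite divr_ge0 ?ltW.
  by rewrite oppr_le0 divr_ge0// ltW// addr_gt0// invr_gt0.
Qed.

Unset Implicit Arguments.

Theorem lemma6 (R : realType) (mu : R) (hmu0 : 0 < mu) (hmu1 : mu < 1) :
  cvg (csmall mu x @[x --> +oo]) /\
  let cinf := lim (csmall mu x @[x --> +oo]) in
  forall tau : R, 0 <= tau ->
    - 4 * expR (- ((1 - mu) * tau)) <= Cnorm mu tau * delta mu tau /\
    Cnorm mu tau * delta mu tau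
      <= - (cinf / (1 + expR (- tau))) * expR (- ((1 - mu) * tau)) /\
    - (cinf / (1 + expR (- tau))) * expR (- ((1 - mu) * tau)) <= 0.
Proof.
have ceq : csmall mu = fun t => (Kf mu t)^-1.
  apply/funext => t; rewrite /csmall (Cnorm_eq hmu0) mulrA -expRD.
  by rewrite addNr expR0 mul1r.
pose f := fun t => - (Kf mu t)^-1.
have ndf : {homo f : n m / n <= m}.
  move=> x y xy; rewrite /f lerN2 lef_pV2 ?posrE ?Kf_gt0//.
  exact: Kf_mono.
have ubf : has_ubound (range f).
  by exists 0; move=> _ [s _ <-]; rewrite /f oppr_le0 invr_ge0 ltW// Kf_gt0.
have hcv := nondecreasing_cvgr ndf ubf.
have hc : csmall mu x @[x --> +oo] --> - sup (range f).
  have -> : csmall mu = fun t => - f t by rewrite ceq; apply/funext => t; rewrite /f opprK.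
  exact: cvgN.
split; first by apply/cvg_ex; exists (- sup (range f)).
rewrite (cvg_lim _ hc); last exact: Rhausdorff.
move=> cinf t t0; rewrite {}/cinf.
have hsup : has_sup (range f) by split => //; exists (f 0), 0.
have cle : - sup (range f) <= (Kf mu t)^-1.
  rewrite lerNl; apply: (sup_upper_bound hsup); by exists t.
have cge : 0 <= - sup (range f).
  rewrite oppr_ge0; apply: ge_sup; first by exists (f 0), 0.
  by move=> _ [s _ <-]; rewrite /f oppr_le0 invr_ge0 ltW// Kf_gt0.
set c := - sup (range f) in cle cge *.
have K2 : 2^-1 <= Kf mu t := Kf_ge hmu0 hmu1 t0.
have X1 : 1 <= expR t by rewrite -expR0 ler_expR.
have eq1 : expR (- ((1 - mu) * t)) = expR (mu * t) * (expR t)^-1.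
  by rewrite mulrBl mul1r opprB expRD expRN.
exact: (final_ineq (expR_gt0 _) X1 K2 cge cle (Cdelta t hmu0) eq1 (expRN t)).
Qed.
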